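(* Let $q>0$ and $r\ge 0$ be real numbers. For every integer $n\ge 0$, $$B_n^q(r)=\sum_{k=0}^n\frac{1}{q^k\,(k+1)}\sum_{j=0}^{k}(-1)^{j}\binom{k}{j}(r+jq)^n,$$ where $B_n^q(r)$ is as defined in the context.
   Context: The Bernoulli polynomials with a $q$ parameter $B_n^q(r)$ are defined by the formal power series identity in $t$ $$\sum_{n=0}^{\infty}B_n^q(r)\frac{t^n}{n!}=\frac{q\,e^{rt}}{1-e^{qt}}\sum_{k=1}^{\infty}\left(\frac{1-e^{qt}}{q}\right)^k\frac{1}{k}.$$ *)

(* Defs.v *)
From HB Require Import structures.
From mathcomp Require Import all_boot all_order all_algebra.
From mathcomp Require Import reals.
Set Implicit Arguments. Unset Strict Implicit. Unset Printing Implicit Defensive.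
Import Order.TTheory GRing.Theory Num.Theory.
Local Open Scope ring_scope.

Section FPS.
Variable R : fieldType.

Definition fps := nat -> R.

Definition fps_mul (f g : fps) : fps :=
  fun n => \sum_(i < n.+1) f i * g (n - i)%N.
Definition fps_scale (c : R) (f : fps) : fps := fun n => c * f n.
Definition fps_one : fps := fun n => if n is 0%N then 1 else 0.
Definition fps_sub (f g : fps) : fps := fun n => f n - g n.
Definition fps_exp (c : R) : fps := fun n => c ^+ n / (n`!)%:R.
Fixpoint fps_pow (f : fps) (k : nat) : fps :=
  if k is k'.+1 then fps_mul f (fps_pow f k') else fps_one.

(* sum_{k>=1} u^k / k, for u with zero constant term (so u^k has order >= k and
   the coefficient of t^n only involves k <= n) *)
Definition fps_logsum (u : fps) : fps :=
  fun n => \sum_(1 <= k < n.+1) fps_pow u k n / k%:R.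

Definition fps_divX (f : fps) : fps := fun n => f n.+1.

(* multiplicative inverse of a series with nonzero constant term *)
Fixpoint fps_inv_seq (f : fps) (n : nat) : seq R :=
  if n is n'.+1 then
    let s := fps_inv_seq f n' in
    rcons s (- (f 0%N)^-1 * \sum_(1 <= i < n.+1) f i * nth 0 s (n - i)%N)
  else [:: (f 0%N)^-1].
Definition fps_inv (f : fps) : fps := fun n => nth 0 (fps_inv_seq f n) n.

(* quotient N / D of two series both having zero constant term,
   computed as (N/t) * (D/t)^{-1} *)
Definition fps_div0 (N D : fps) : fps := fps_mul (fps_divX N) (fps_inv (fps_divX D)).
End FPS.

(* The generating function
   q e^{rt} / (1 - e^{qt}) * sum_{k>=1} ((1 - e^{qt})/q)^k / k *)
Definition Bq_egf (R : fieldType) (q r : R) : fps R :=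
  let D := fps_sub (fps_one R) (fps_exp q) in
  let u := fps_scale q^-1 D in
  fps_div0 (fps_mul (fps_scale q (fps_exp r)) (fps_logsum u)) D.

Definition Bq (R : fieldType) (q r : R) (n : nat) : R := (n`!)%:R * Bq_egf q r n.

(* Main.v *)
Require Import Defs.
From HB Require Import structures.
From mathcomp Require Import all_boot all_order all_algebra.
From mathcomp Require Import reals.
From mathcomp Require Import zify ring.
Import Order.TTheory GRing.Theory Num.Theory.
Local Open Scope ring_scope.

Section Aux.
Variable R : realType.
Implicit Types (f g : fps R).

Definition tr (N : nat) f : {poly R} := \poly_(i < N.+1) f i.
Definition eqN (N : nat) (p s : {poly R}) := forall i, (i <= N)%N -> p`_i = s`_i.

Lemma coef_tr N f i : (i <= N)%N -> (tr N f)`_i = f i.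
Proof. by move=> hi; rewrite /tr coef_poly ltnS hi. Qed.

Lemma eqN_refl N (p : {poly R}) : eqN N p p. Proof. by []. Qed.
Lemma eqN_sym N (p s : {poly R}) : eqN N p s -> eqN N s p.
Proof. by move=> h i hi; rewrite h. Qed.
Lemma eqN_trans N (p s s' : {poly R}) : eqN N p s -> eqN N s s' -> eqN N p s'.
Proof. by move=> h1 h2 i hi; rewrite h1 ?h2. Qed.

Lemma eqN_add N (p p' s s' : {poly R}) : eqN N p p' -> eqN N s s' -> eqN N (p + s) (p' + s').
Proof. by move=> h1 h2 i hi; rewrite !coefD h1 ?h2. Qed.

Lemma eqN_mul N (p p' s s' : {poly R}) : eqN N p p' -> eqN N s s' -> eqN N (p * s) (p' * s').
Proof.
move=> h1 h2 i hi; rewrite !coefM; apply: eq_bigr => j _.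
have := ltn_ord j => hj.
rewrite h1 ?h2 //; lia.
Qed.

Lemma eqN_exp N (p p' : {poly R}) k : eqN N p p' -> eqN N (p ^+ k) (p' ^+ k).
Proof.
move=> h; elim: k => [|k IH]; first by rewrite !expr0.
by rewrite !exprS; apply: eqN_mul.
Qed.

Lemma eqN_sum N (I : Type) (r : seq I) (F G : I -> {poly R}) :
  (forall x, eqN N (F x) (G x)) -> eqN N (\sum_(x <- r) F x) (\sum_(x <- r) G x).
Proof.
move=> h i hi; rewrite !coef_sum; apply: eq_bigr => x _; exact: h.
Qed.

Arguments eqN_mul {N p p' s s'}.
Arguments eqN_trans {N p s s'}.
Arguments eqN_sym {N p s}.

Lemma tr_mul N f g : eqN N (tr N (fps_mul f g)) (tr N f * tr N g).
Proof.
move=> i hi; rewrite coef_tr // coefM /fps_mul; apply: eq_bigr => j _.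
have := ltn_ord j => hj.
rewrite !coef_tr //; lia.
Qed.

Lemma tr_one N : tr N (fps_one R) = 1.
Proof.
apply/polyP => i; rewrite /tr coef_poly coef1.
case: i => [|i] //=; by case: ifP.
Qed.

Lemma tr_pow N f k : eqN N (tr N (fps_pow f k)) (tr N f ^+ k).
Proof.
elim: k => [|k IH]; first by rewrite tr_one expr0.
rewrite exprS /=; apply: eqN_trans (tr_mul _ _ _) _.
exact: eqN_mul.
Qed.


Lemma natf_neq0 {m : nat} : (0 < m)%N -> (m%:R : R) != 0.
Proof. by move=> h; rewrite pnatr_eq0 -lt0n. Qed.

Lemma fps_exp_mul (a b : R) i :
  fps_mul (fps_exp a) (fps_exp b) i = fps_exp (a + b) i.
Proof.
rewrite /fps_mul /fps_exp addrC exprDn mulr_suml; apply: eq_bigr => j _.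
have hj : (j <= i)%N by have := ltn_ord j; lia.
have hb := bin_fact hj.
have f1 : (j`!%:R : R) != 0 := natf_neq0 (fact_gt0 j).
have f2 : ((i - j)`!%:R : R) != 0 := natf_neq0 (fact_gt0 (i - j)).
have f4 : ('C(i, j)%:R : R) != 0 by apply: natf_neq0; rewrite bin_gt0.
rewrite -mulr_natr -hb !natrM.
field.
by rewrite f1 f2 f4.
Qed.

Lemma exp_law N (a b : R) :
  eqN N (tr N (fps_exp a) * tr N (fps_exp b)) (tr N (fps_exp (a + b))).
Proof.
eapply eqN_trans; first by apply: eqN_sym; apply: tr_mul.
by move=> i hi; rewrite !coef_tr // fps_exp_mul.
Qed.

Lemma exp0 N : tr N (fps_exp (0 : R)) = 1.
Proof.
rewrite -(tr_one N); apply/polyP => i; rewrite /tr !coef_poly.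
case: ifP => // _; rewrite /fps_exp /fps_one expr0n.
by case: i => [|i] /=; rewrite ?fact0 ?divr1 ?mul0r.
Qed.

Lemma exp_pow N (c : R) j :
  eqN N (tr N (fps_exp c) ^+ j) (tr N (fps_exp (j%:R * c))).
Proof.
elim: j => [|j IH]; first by rewrite expr0 mul0r exp0.
rewrite exprS; eapply eqN_trans; first by apply: eqN_mul; [apply: eqN_refl | apply: IH].
eapply eqN_trans; first by apply: exp_law.
by rewrite -{1}(mul1r c) -mulrDl -natr1 addrC.
Qed.

Lemma size_inv_seq f n : size (fps_inv_seq f n) = n.+1.
Proof. by elim: n => [|n IH] //=; rewrite size_rcons IH. Qed.

Lemma inv_seq_prefix f n i : (i <= n)%N -> nth 0 (fps_inv_seq f n) i = fps_inv f i.
Proof.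
elim: n => [|n IH] hi.
  by have -> : i = 0%N by lia.
case: (ltnP i n.+1) => h.
  by rewrite /= nth_rcons size_inv_seq h IH //; lia.
by have -> : i = n.+1 by lia.
Qed.

Lemma fps_inv_S f m :
  fps_inv f m.+1 = - (f 0%N)^-1 * \sum_(1 <= i < m.+2) f i * fps_inv f (m.+1 - i)%N.
Proof.
rewrite {1}/fps_inv /= nth_rcons size_inv_seq ltnn eqxx.
congr (_ * _); rewrite !big_add1 /=; apply: eq_big_nat => i hi.
rewrite inv_seq_prefix //; lia.
Qed.

Lemma fps_mul_inv f m : f 0%N != 0 -> fps_mul f (fps_inv f) m = fps_one R m.
Proof.
move=> h0; case: m => [|m].
  by rewrite /fps_mul big_ord_recl big_ord0 addr0 /fps_inv /= mulfV.
rewrite /fps_mul /= big_ord_recl /= subn0 fps_inv_S.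
rewrite big_add1 big_mkord /=.
rewrite mulrA mulrN mulfV // mulN1r.
under eq_bigr => i _ do rewrite /bump /=.
by rewrite addNr.
Qed.

Lemma divX_mull f g m : f 0%N = 0 ->
  fps_mul f g m.+1 = fps_mul (fps_divX f) g m.
Proof.
move=> h; rewrite /fps_mul big_ord_recl h mul0r add0r; apply: eq_bigr => i _.
by rewrite /fps_divX.
Qed.

Lemma divX_mulr f g m : g 0%N = 0 ->
  fps_mul f g m.+1 = fps_mul f (fps_divX g) m.
Proof.
move=> h; rewrite /fps_mul big_ord_recr /= subnn h mulr0 addr0; apply: eq_bigr => i _.
rewrite /fps_divX; congr (_ * g _); have := ltn_ord i; lia.
Qed.


Lemma Xfactor (p : {poly R}) : p`_0 = 0 -> p = drop_poly 1 p * 'X.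
Proof.
move=> h; rewrite -{1}(poly_take_drop 1 p).
have -> : take_poly 1 p = 0.
  by apply/polyP => i; rewrite coef_take_poly coef0; case: i => [|i] //=.
by rewrite add0r expr1.
Qed.

Section Main.
Variables (q r : R) (n : nat).
Hypothesis hq : q != 0.

Let D := fps_sub (fps_one R) (fps_exp q).
Let u := fps_scale q^-1 D.
Let Uu := tr n u.
Let U' := tr n (fps_divX u).
Let P := tr n (fps_divX D).
Let Er := tr n (fps_exp r).
Let S' := \sum_(k < n.+1) (k.+1%:R)^-1 *: (U' * Uu ^+ k).
Let S := \sum_(k < n.+1) (k.+1%:R)^-1 *: (Uu ^+ k).

Lemma D0 : D 0%N = 0.
Proof. by rewrite /D /fps_sub /fps_one /fps_exp expr0 fact0 divr1 subrr. Qed.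
Lemma u0 : u 0%N = 0.
Proof. by rewrite /u /fps_scale D0 mulr0. Qed.

Lemma Uu_zero k i : (i < k)%N -> (U' * Uu ^+ k)`_i = 0.
Proof.
move=> hik.
have h0 : Uu`_0 = 0 by rewrite /Uu coef_tr // u0.
rewrite (Xfactor Uu h0).
have -> : U' * (drop_poly 1 Uu * 'X) ^+ k = 'X^k * (U' * drop_poly 1 Uu ^+ k) by rewrite exprMn; ring.
by rewrite coefXnM hik.
Qed.

Lemma stepB i : (i <= n)%N -> fps_logsum u i.+1 = S'`_i.
Proof.
move=> hi.
rewrite /fps_logsum big_add1 /= /S' coef_sum.
rewrite -(big_mkord xpredT (fun k => ((k.+1%:R)^-1 *: (U' * Uu ^+ k))`_i)).
rewrite [RHS](big_cat_nat (n := i.+1)) //=.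
rewrite [X in _ = _ + X]big1_seq ?addr0; last first.
  move=> k /andP [_]; rewrite mem_index_iota => /andP [hk _].
  by rewrite coefZ Uu_zero ?mulr0.
apply: eq_big_nat => k /andP [_ hk].
rewrite coefZ /= divX_mull ?u0 // mulrC; congr (_ * _).
have e1 := tr_mul n (fps_divX u) (fps_pow u k).
rewrite -(coef_tr n (fps_mul (fps_divX u) (fps_pow u k)) i hi).
rewrite e1 //; apply: eqN_mul hi; first exact: eqN_refl.
exact: tr_pow.
Qed.


Lemma tr_scale N c f : tr N (fps_scale c f) = c%:P * tr N f.
Proof.
apply/polyP => i; rewrite coefCM /tr !coef_poly; case: ifP => _; by rewrite ?mulr0.
Qed.

Lemma U'_eq : U' = q^-1%:P * P.
Proof. by rewrite /P -tr_scale. Qed.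

Lemma S'_eq : S' = q^-1%:P * P * S.
Proof.
rewrite /S' /S mulr_sumr; apply: eq_bigr => k _.
by rewrite U'_eq scalerAr.
Qed.

Let Nser := fps_mul (fps_scale q (fps_exp r)) (fps_logsum u).

Lemma stepC : eqN n (tr n (fps_divX Nser)) (q%:P * Er * S').
Proof.
move=> i hi; rewrite coef_tr // /fps_divX /Nser divX_mulr; last first.
  by rewrite /fps_logsum big_geq.
rewrite -(coef_tr n _ i hi) (tr_mul n _ _ i hi) tr_scale.
apply: eqN_mul hi; first exact: eqN_refl.
by move=> j hj; rewrite coef_tr // /fps_divX stepB.
Qed.

Lemma inv_P : eqN n (P * tr n (fps_inv (fps_divX D))) 1.
Proof.
eapply eqN_trans; first by apply: eqN_sym; apply: tr_mul.
move=> i hi; rewrite coef_tr // fps_mul_inv; first by rewrite -(tr_one n) coef_tr.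
rewrite /fps_divX /D /fps_sub /fps_one /fps_exp /= expr1 divr1 sub0r oppr_eq0 //.
Qed.

Lemma stepCD : Bq_egf q r n = (Er * S)`_n.
Proof.
rewrite /Bq_egf /fps_div0 /=.
change (fps_mul (fps_divX Nser) (fps_inv (fps_divX D)) n = (Er * S)`_n).
rewrite -(coef_tr n _ n (leqnn n)) (tr_mul n _ _ n (leqnn n)).
rewrite (eqN_mul stepC (eqN_refl n (tr n (fps_inv (fps_divX D)))) n (leqnn n)).
rewrite S'_eq.
have hqq : q%:P * q^-1%:P = 1 :> {poly R} by rewrite -polyCM mulfV.
have -> : q%:P * Er * (q^-1%:P * P * S) * tr n (fps_inv (fps_divX D)) =
   (q%:P * q^-1%:P) * (Er * S * (P * tr n (fps_inv (fps_divX D)))) by ring.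
rewrite hqq mul1r (eqN_mul (eqN_refl n (Er * S)) inv_P n (leqnn n)).
by rewrite mulr1.
Qed.

Lemma Uu_eq : Uu = q^-1%:P * (1 - tr n (fps_exp q)).
Proof.
apply/polyP => i; rewrite coefCM coefB -(tr_one n) /Uu /tr !coef_poly.
by case: ifP => _; rewrite ?subrr ?mulr0.
Qed.

Lemma coefE k : (Er * Uu ^+ k)`_n =
  q^-1 ^+ k * \sum_(j < k.+1) (-1) ^+ j * ('C(k, j))%:R * ((r + j%:R * q) ^+ n / (n`!)%:R).
Proof.
rewrite Uu_eq exprMn -polyC_exp mulrCA coefCM; congr (_ * _).
rewrite exprBn mulr_sumr coef_sum; apply: eq_bigr => j _.
rewrite [in LHS]expr1n [in LHS]mulr1 [in LHS]mulrnAr coefMn.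
have -> : ((-1) ^+ j : {poly R}) = ((-1) ^+ j)%:P by rewrite polyC_exp polyCN polyC1.
rewrite mulrCA coefCM.
have e := eqN_trans (eqN_mul (eqN_refl n Er) (exp_pow n q j)) (exp_law n r (j%:R * q)).
rewrite (e n (leqnn n)) coef_tr // /fps_exp.
by rewrite -mulr_natr; ring.
Qed.

Lemma main_aux : Bq q r n =
  \sum_(k < n.+1) (q ^+ k * (k.+1)%:R)^-1 *
     \sum_(j < k.+1) (-1) ^+ j * ('C(k, j))%:R * (r + j%:R * q) ^+ n.
Proof.
rewrite /Bq stepCD /S mulr_sumr coef_sum mulr_sumr; apply: eq_bigr => k _.
rewrite -scalerAr coefZ coefE !mulr_sumr; apply: eq_bigr => j _.
have f1 : (k.+1%:R : R) != 0 := natf_neq0 (ltn0Sn k).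
have f2 : (n`!%:R : R) != 0 := natf_neq0 (fact_gt0 n).
rewrite exprVn; field.
rewrite f2 expf_neq0 //; move: f1; rewrite -natr1 addrC; by move=> ->.
Qed.

End Main.

End Aux.

Theorem mainTheorem3 (R : realType) (q r : R) (hq : 0 < q) (hr : 0 <= r) (n : nat) :
  Bq q r n =
  \sum_(k < n.+1) (q ^+ k * (k.+1)%:R)^-1 *
     \sum_(j < k.+1) (-1) ^+ j * ('C(k, j))%:R * (r + j%:R * q) ^+ n.
Proof.
apply: main_aux; by rewrite gt_eqF.
Qed.
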